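(* For any $a>b>0$, the function $\rho\mapsto\eta(\rho,a,b)$ is convex on $[0,1]$ and symmetric about $\rho=1/2$ (i.e., $\eta(\rho,a,b)=\eta(1-\rho,a,b)$); in particular it is minimized at $\rho=1/2$, where $\eta(1/2,a,b)=\frac12(\sqrt a-\sqrt b)^2$.
   Context: With $\bar\rho=1-\rho$, $\tau=\frac{a-b}{\log a-\log b}$, $\gamma=\sqrt{(\bar\rho-\rho)^2\tau^2+4\rho\bar\rho ab}$, for $\rho\in(0,1)$ $$\eta(\rho,a,b)=\frac{a+b}{2}-\gamma+\frac{(\bar\rho-\rho)\tau}{2}\log\frac{\rho(\gamma+(\bar\rho-\rho)\tau)}{\bar\rho(\gamma-(\bar\rho-\rho)\tau)},$$ and $\eta(0,a,b)=\eta(1,a,b)=\frac{a+b}{2}-\tau\log\frac{e\sqrt{ab}}{\tau}$ (the limits as $\rho\to0$ and $\rho\to1$). *)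

(* Defs.v *)
From Stdlib Require Import Reals Lra.
Open Scope R_scope.

Definition tau_ab (a b : R) : R := (a - b) / (ln a - ln b).

Definition gamma_ab (rho a b : R) : R :=
  sqrt (((1 - rho) - rho)^2 * (tau_ab a b)^2 + 4 * rho * (1 - rho) * a * b).

(* eta(rho,a,b); for rho in (0,1) the main formula, at rho = 0 or 1 the limit value *)
Definition eta (rho a b : R) : R :=
  let rb := 1 - rho in
  let t := tau_ab a b in
  let g := gamma_ab rho a b in
  if Rlt_dec 0 rho then
    if Rlt_dec rho 1 then
      (a + b) / 2 - g
      + ((rb - rho) * t / 2)
        * ln ((rho * (g + (rb - rho) * t)) / (rb * (g - (rb - rho) * t)))
    else (a + b) / 2 - t * ln (exp 1 * sqrt (a * b) / t)
  else (a + b) / 2 - t * ln (exp 1 * sqrt (a * b) / t).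

(* Main.v *)
Require Import Defs.
From Stdlib Require Import Reals Lra Psatz.
Open Scope R_scope.

Definition psi (a b w rho : R) : R :=
  rho * (b - w) + (1 - rho) * (a - a * b / w)
  - (1 - 2 * rho) * tau_ab a b * (ln w - ln b).

Lemma ln_div' x y : 0 < x -> 0 < y -> ln (x / y) = ln x - ln y.
Proof. intros; unfold Rdiv; rewrite ln_mult, ln_Rinv; try lra.
  apply Rinv_0_lt_compat; lra. Qed.

Lemma tau_facts a b : 0 < b -> b < a ->
  0 < ln a - ln b /\ tau_ab a b * (ln a - ln b) = a - b /\ 0 < tau_ab a b.
Proof.
  intros hb hab. assert (h : ln b < ln a) by (apply ln_increasing; lra).
  unfold tau_ab; split; [lra|split].
  - field; lra.
  - apply Rdiv_lt_0_compat; lra.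
Qed.

Lemma psi_le a b rho ws w : 0 < b -> b < a -> 0 <= rho <= 1 -> 0 < ws ->
  rho * ws ^ 2 + (1 - 2 * rho) * tau_ab a b * ws - (1 - rho) * a * b = 0 ->
  0 < w -> psi a b w rho <= psi a b ws rho.
Proof.
  intros hb hab hr hws hc hw.
  set (t := tau_ab a b) in *.
  set (lx := ln w - ln ws).
  assert (hE : w = ws * exp lx).
  { unfold lx. rewrite <- ln_div' by lra. rewrite exp_ln.
    field; lra. apply Rdiv_lt_0_compat; lra. }
  assert (hF : a * b / w = (a * b / ws) * exp (- lx)).
  { rewrite hE, exp_Ropp. field. split; [|lra].
    apply Rgt_not_eq, exp_pos. }
  set (K := a * b / ws) in *.
  assert (hK : (1 - 2 * rho) * t = (1 - rho) * K - rho * ws).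
  { unfold K. apply (Rmult_eq_reg_r ws); [|lra]. field_simplify; try lra.
    }
  assert (e1 := exp_ineq1_le lx). assert (e2 := exp_ineq1_le (- lx)).
  assert (hKp : 0 < K) by (unfold K; apply Rdiv_lt_0_compat; nra).
  unfold psi. fold t. rewrite hF.
  replace (ln w - ln b) with (lx + (ln ws - ln b)) by (unfold lx; ring).
  rewrite hE at 1.
  set (E := exp lx) in *. set (F := exp (- lx)) in *.
  assert (0 <= rho * ws * (E - 1 - lx)) by (apply Rmult_le_pos; nra).
  assert (0 <= (1 - rho) * K * (F - 1 + lx)) by (apply Rmult_le_pos; nra).
  replace ((1 - 2 * rho) * t * (lx + (ln ws - ln b)))
    with ((1 - 2 * rho) * t * lx + (1 - 2 * rho) * t * (ln ws - ln b)) by ring.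
  assert (hL : (1 - 2 * rho) * t * lx = ((1 - rho) * K - rho * ws) * lx) by (rewrite hK; ring).
  change (a*b/ws) with K. rewrite hL. nra.
Qed.

Lemma ln_sqrt' x : 0 < x -> ln (sqrt x) = ln x / 2.
Proof. intros hx. assert (hs : 0 < sqrt x) by (apply sqrt_lt_R0; lra).
  assert (h : ln x = ln (sqrt x * sqrt x)) by (rewrite sqrt_sqrt; lra).
  rewrite ln_mult in h by lra. lra. Qed.

Lemma eta_end a b : 0 < b -> b < a ->
  (a + b) / 2 - tau_ab a b * ln (exp 1 * sqrt (a * b) / tau_ab a b)
  = (a + b) / 2 - tau_ab a b * (1 + (ln a + ln b) / 2 - ln (tau_ab a b)).
Proof.
  intros hb hab. destruct (tau_facts a b hb hab) as [hl [ht htp]].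
  rewrite ln_div', ln_mult, ln_exp, ln_sqrt', ln_mult; try lra; try nra.
  apply exp_pos. apply sqrt_lt_R0; nra. apply Rmult_lt_0_compat.
  apply exp_pos. apply sqrt_lt_R0; nra.
Qed.

Lemma eta_eq a b rho : 0 < b -> b < a -> 0 <= rho <= 1 ->
  exists ws, 0 < ws /\
  rho * ws ^ 2 + (1 - 2 * rho) * tau_ab a b * ws - (1 - rho) * a * b = 0 /\
  eta rho a b = psi a b ws rho.
Proof.
  intros hb hab hr. destruct (tau_facts a b hb hab) as [hl [ht htp]].
  assert (hab0 : 0 < a * b) by nra.
  unfold eta. destruct (Rlt_dec 0 rho) as [h0|h0].
  - destruct (Rlt_dec rho 1) as [h1|h1].
    + set (t := tau_ab a b) in *.
      set (g := gamma_ab rho a b).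
      set (s := 1 - rho - rho).
      assert (hg2 : g * g = s^2 * t^2 + 4 * rho * (1 - rho) * a * b).
      { unfold g, gamma_ab. fold t. apply sqrt_sqrt.
        assert (0 < rho * (1 - rho)) by nra. nra. }
      assert (hg0 : 0 <= g) by (unfold g, gamma_ab; apply sqrt_pos).
      assert (hpos : 0 < 4 * rho * (1 - rho) * a * b).
      { assert (0 < rho * (1 - rho)) by nra. nra. }
      assert (hgm : 0 < g - s * t) by nra.
      assert (hgp : 0 < g + s * t) by nra.
      exists ((g - s * t) / (2 * rho)). split; [apply Rdiv_lt_0_compat; lra|split].
      * unfold s in *. field_simplify; [|lra].
        replace (g^2) with (g*g) by ring. rewrite hg2. field_simplify. lra. lra.
      * assert (hab' : a * b / ((g - s * t) / (2 * rho)) = (g + s * t) / (2 * (1 - rho))).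
        { assert (hprod : (g + s*t)*(g - s*t) = 4*rho*(1-rho)*a*b).
          { replace ((g + s*t)*(g - s*t)) with (g*g - s^2*t^2) by ring. rewrite hg2. ring. }
          apply Rmult_eq_reg_r with ((g - s*t) * (2*(1-rho))); [|apply Rmult_integral_contrapositive_currified; lra].
          replace (a * b / ((g - s * t) / (2 * rho)) * ((g - s * t) * (2 * (1 - rho))))
            with (4*rho*(1-rho)*a*b) by (field; lra).
          replace ((g + s * t) / (2 * (1 - rho)) * ((g - s * t) * (2 * (1 - rho))))
            with ((g + s*t)*(g - s*t)) by (field; lra).
          lra. }
        assert (harg : rho * (g + (1 - rho - rho) * t) / ((1 - rho) * (g - (1 - rho - rho) * t))
                 = a * b / (((g - s * t) / (2 * rho)) * ((g - s * t) / (2 * rho)))).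
        { fold s.
          replace (a * b / ((g - s * t) / (2 * rho) * ((g - s * t) / (2 * rho))))
            with ((a * b / ((g - s * t) / (2 * rho))) / ((g - s * t) / (2 * rho)))
            by (field; split; lra).
          rewrite hab'. field. lra. }
        fold s in harg. rewrite harg. unfold psi. fold t. rewrite hab'.
        assert (hw : 0 < (g - s * t) / (2 * rho)) by (apply Rdiv_lt_0_compat; lra).
        rewrite ln_div', ln_mult, ln_mult; try lra; try apply Rmult_lt_0_compat; try lra.
        set (lw := ln ((g - s * t) / (2 * rho))).
        replace (s * t / 2 * (ln a + ln b - (lw + lw)))
          with (s * (t * (ln a - ln b)) / 2 + s * t * (ln b - lw)) by field.
        rewrite ht. unfold s. field. lra.
    + assert (rho = 1) by lra. subst rho.
      rewrite eta_end by lra.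
      exists (tau_ab a b). split; [lra|split]; [ring|].
      unfold psi. match goal with |- ?L = ?R =>
        assert (E : L - R = - (tau_ab a b * (ln a - ln b) - (a - b)) / 2) by (field; lra) end.
      rewrite ht in E. lra.
  - assert (rho = 0) by lra. subst rho.
    rewrite eta_end by lra.
    exists (a * b / tau_ab a b). split; [apply Rdiv_lt_0_compat; lra|split].
    + field. lra.
    + unfold psi. rewrite ln_div' by lra. rewrite ln_mult by lra.
      replace (a * b / (a * b / tau_ab a b)) with (tau_ab a b) by (field; lra).
      nra.
Qed.

Lemma eta_ge a b rho w : 0 < b -> b < a -> 0 <= rho <= 1 -> 0 < w ->
  psi a b w rho <= eta rho a b.
Proof.
  intros hb hab hr hw. destruct (eta_eq a b rho hb hab hr) as [ws [h1 [h2 h3]]].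
  rewrite h3. apply psi_le; auto.
Qed.

Lemma psi_affine a b w l r1 r2 : 0 < w ->
  psi a b w (l * r1 + (1 - l) * r2) = l * psi a b w r1 + (1 - l) * psi a b w r2.
Proof. intros. unfold psi. field. lra. Qed.

Lemma psi_sym a b w rho : 0 < b -> b < a -> 0 < w ->
  psi a b w (1 - rho) = psi a b (a * b / w) rho.
Proof.
  intros hb hab hw. destruct (tau_facts a b hb hab) as [hl [ht htp]].
  unfold psi. rewrite ln_div', ln_mult by nra.
  replace (a * b / (a * b / w)) with w by (field; split; lra).
  match goal with |- ?L = ?R =>
    assert (E : L - R = (1 - 2 * rho) * (tau_ab a b * (ln a - ln b) - (a - b))) by (field; lra) end.
  rewrite ht in E. lra.
Qed.

Theorem lemma13 (a b : R) (hb : 0 < b) (hab : b < a) :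
  (forall r1 r2 l : R, 0 <= r1 <= 1 -> 0 <= r2 <= 1 -> 0 <= l <= 1 ->
     eta (l * r1 + (1 - l) * r2) a b <= l * eta r1 a b + (1 - l) * eta r2 a b)
  /\ (forall rho : R, 0 <= rho <= 1 -> eta rho a b = eta (1 - rho) a b)
  /\ (forall rho : R, 0 <= rho <= 1 -> eta (1/2) a b <= eta rho a b)
  /\ eta (1/2) a b = (1/2) * (sqrt a - sqrt b)^2.
Proof.
  assert (conv : forall r1 r2 l : R, 0 <= r1 <= 1 -> 0 <= r2 <= 1 -> 0 <= l <= 1 ->
     eta (l * r1 + (1 - l) * r2) a b <= l * eta r1 a b + (1 - l) * eta r2 a b).
  { intros r1 r2 l h1 h2 hl.
    assert (hm : 0 <= l * r1 + (1 - l) * r2 <= 1) by nra.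
    destruct (eta_eq a b _ hb hab hm) as [ws [hws [_ e]]].
    rewrite e, psi_affine by lra.
    assert (psi a b ws r1 <= eta r1 a b) by (apply eta_ge; auto).
    assert (psi a b ws r2 <= eta r2 a b) by (apply eta_ge; auto).
    nra. }
  assert (sym : forall rho : R, 0 <= rho <= 1 -> eta rho a b = eta (1 - rho) a b).
  { intros rho hr.
    assert (hr' : 0 <= 1 - rho <= 1) by lra.
    destruct (eta_eq a b _ hb hab hr) as [w1 [hw1 [_ e1]]].
    destruct (eta_eq a b _ hb hab hr') as [w2 [hw2 [_ e2]]].
    apply Rle_antisym.
    - rewrite e1. replace rho with (1 - (1 - rho)) at 1 by ring.
      rewrite psi_sym by lra. apply eta_ge; auto.
      apply Rdiv_lt_0_compat; nra.
    - rewrite e2, psi_sym by lra. apply eta_ge; auto.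
      apply Rdiv_lt_0_compat; nra. }
  split; [exact conv|split; [exact sym|split]].
  - intros rho hr.
    assert (h := conv rho (1 - rho) (1/2) hr ltac:(lra) ltac:(lra)).
    replace (1 / 2 * rho + (1 - 1 / 2) * (1 - rho)) with (1/2) in h by field.
    rewrite <- (sym rho hr) in h. lra.
  - unfold eta. destruct (Rlt_dec 0 (1/2)); [|lra].
    destruct (Rlt_dec (1/2) 1); [|lra].
    unfold gamma_ab.
    replace ((1 - 1 / 2 - 1 / 2) ^ 2 * tau_ab a b ^ 2 + 4 * (1 / 2) * (1 - 1 / 2) * a * b)
      with (a * b) by field.
    rewrite sqrt_mult by lra.
    replace (1 - 1 / 2 - 1 / 2) with 0 by field.
    assert (ha := sqrt_sqrt a ltac:(lra)). assert (hb' := sqrt_sqrt b ltac:(lra)).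
    field_simplify. nra.
Qed.
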